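(* Let $K$ be a connected 4-regular simple graph with an odd number of vertices, let $v,w$ be adjacent vertices of $K$ having exactly one common neighbour $c$, let the neighbours of $w$ be $v,a,b,c$ and the neighbours of $v$ be $w,c,d,e$, and let $S=K-\{v,w\}$. There is a fixed-point free involution on $\mathcal{S}_{\{a,b,c\},\{d,e\}}\cup\mathcal{S}_{\{a,b\},\{c,d,e\}}$, and thus $s_{\{a,b,c\},\{d,e\}}+s_{\{a,b\},\{c,d,e\}}\equiv 0\pmod 2$.
   Context: A spanning 2-forest is a spanning forest with exactly two trees (a tree may be a single vertex). For a bipartition $P=\{P_1,P_2\}$ of a subset of $V(S)$, $\mathcal{S}_P$ is the set of bipartitions of $E(S)$ such that one part is the edge set of a spanning tree of $S$ and the other is the edge set of a spanning 2-forest of $S$ with one tree containing all vertices of $P_1$ and the other containing all vertices of $P_2$; $s_P=|\mathcal{S}_P|$. *)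

(* Defs.v *)
From mathcomp Require Import all_boot.
From mathcomp Require Import boolp.
Set Implicit Arguments. Unset Strict Implicit. Unset Printing Implicit Defensive.

Section Graphs.
Variable V : finType.

Definition simple_graph (adj : rel V) : Prop :=
  symmetric adj /\ irreflexive adj.

Definition nbhd (adj : rel V) (x : V) : {set V} := [set y | adj x y].

Definition regular4 (adj : rel V) : Prop := forall x, #|nbhd adj x| = 4.

Definition graph_connected (adj : rel V) : Prop := forall x y, connect adj x y.

Definition induced_edges (adj : rel V) (U : {set V}) : {set {set V}} :=
  [set e : {set V} | [exists x, exists y,
     [&& x \in U, y \in U, adj x y & e == [set x; y]]]].

Definition edge_rel (F : {set {set V}}) : rel V := fun x y => [set x; y] \in F.

Definition has_cycle (F : {set {set V}}) : Prop :=
  exists s : seq V, [/\ uniq s, 3 <= size s & cycle (edge_rel F) s].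

Definition acyclic (F : {set {set V}}) : Prop := ~ has_cycle F.

Definition spanning_tree (U : {set V}) (E T : {set {set V}}) : Prop :=
  [/\ T \subset E, acyclic T &
      forall x y, x \in U -> y \in U -> connect (edge_rel T) x y].

Definition spanning_2forest_sep (U : {set V}) (E F : {set {set V}})
    (P1 P2 : {set V}) : Prop :=
  [/\ F \subset E, acyclic F &
      (exists x y, [/\ x \in U, y \in U, ~~ connect (edge_rel F) x y &
          forall z, z \in U -> connect (edge_rel F) x z \/ connect (edge_rel F) y z])] /\
  [/\ (forall x y, x \in P1 -> y \in P1 -> connect (edge_rel F) x y),
      (forall x y, x \in P2 -> y \in P2 -> connect (edge_rel F) x y) &
      (forall x y, x \in P1 -> y \in P2 -> ~~ connect (edge_rel F) x y)].

(* The bipartition {T, E \ T} of E is represented by its spanning-tree part T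
   (tree and 2-forest parts have different sizes, so this is a bijection). *)
Definition calS (U : {set V}) (E : {set {set V}}) (P1 P2 : {set V})
    : {set {set {set V}}} :=
  [set T : {set {set V}} | `[< spanning_tree U E T /\
                               spanning_2forest_sep U E (E :\: T) P1 P2 >]].

End Graphs.

(* Main.v *)
Require Import Defs.
From mathcomp Require Import all_boot.
From mathcomp Require Import boolp.
Set Implicit Arguments. Unset Strict Implicit. Unset Printing Implicit Defensive.

Lemma closedP (T : finType) (e : rel T) (R : pred T) x y :
  (forall u u', R u -> e u u' -> R u') -> R x -> connect e x y -> R y.
Proof.
move=> cl Rx /connectP [p pth ->]; elim: p x pth Rx => //= z p IH x /andP[exz pth] Rx.
exact: IH pth (cl _ _ Rx exz).
Qed.

Lemma edge_rel_sym (T : finType) (F : {set {set T}}) : symmetric (edge_rel F).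
Proof. by move=> x y; rewrite /edge_rel setUC. Qed.

Lemma set2_eqE (T : finType) (x y u w : T) :
  ([set x; y] == [set u; w]) = ((x == u) && (y == w)) || ((x == w) && (y == u)).
Proof.
apply/idP/idP.
  move/eqP=> h.
  have hx : x \in [set u; w] by rewrite -h !inE eqxx.
  have hy : y \in [set u; w] by rewrite -h !inE eqxx orbT.
  have hu : u \in [set x; y] by rewrite h !inE eqxx.
  have hw : w \in [set x; y] by rewrite h !inE eqxx orbT.
  move: hx hy hu hw {h}; rewrite !inE.
  by do ![case/orP=> /eqP ?; subst] => //; rewrite ?eqxx ?orbT.
by case/orP => /andP[/eqP-> /eqP->] //; rewrite setUC.
Qed.

Lemma card4_uniq (T : finType) (x1 x2 x3 x4 : T) :
  #|[set x1; x2; x3; x4]| = 4 -> uniq [:: x1; x2; x3; x4].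
Proof.
move=> h; apply/card_uniqP; rewrite /= -h; apply: eq_card => z.
by rewrite !inE !orbA.
Qed.

Lemma leaf_connect (T : finType) (e eH : rel T) (c p : T) :
  symmetric eH -> p != c ->
  (forall u u', e u u' = eH u u' || ((u == c) && (u' == p)) || ((u == p) && (u' == c))) ->
  (forall u, ~~ eH c u) ->
  (forall z z', z != c -> z' != c -> connect e z z' = connect eH z z') /\
  (forall z, z != c -> connect e z c = connect eH z p).
Proof.
move=> sH pc he iso.
have csH := sym_connect_sym sH.
have isoc z : connect eH z c -> z = c.
  rewrite csH => h; apply/eqP.
  have cl : forall u u', pred1 c u -> eH u u' -> pred1 c u'.
    by move=> u u' /= /eqP -> ecu; move: (iso u'); rewrite ecu.
  exact: (@closedP _ eH (pred1 c) c z cl (eqxx c) h).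
have sub z z' : connect eH z z' -> connect e z z'.
  apply: connect_sub => u u' h; apply: connect1; by rewrite he h.
have key z z' : z != c -> connect e z z' ->
    connect eH z z' || ((z' == c) && connect eH z p).
  move=> zc; apply: (@closedP _ e [pred u | connect eH z u || ((u == c) && connect eH z p)] z z'); last by rewrite /= connect0.
  move=> u u' /= /orP[hu|/andP[/eqP uc hzp]]; rewrite he.
    case/orP=> [/orP[h|/andP[/eqP uc /eqP up]]|/andP[/eqP up /eqP uc]].
    - by rewrite (connect_trans hu (connect1 h)).
    - by subst u; move/isoc: hu => /eqP; rewrite (negbTE zc).
    - by subst; rewrite eqxx hu orbT.
  subst u; case/orP=> [/orP[h|/andP[_ /eqP up]]|/andP[/eqP cp _]].
  - by move: (iso u'); rewrite h.
  - by subst; rewrite hzp.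
  - by move: pc; rewrite cp eqxx.
split.
  move=> z z' zc z'c; apply/idP/idP; last exact: sub.
  by move/(key _ _ zc); rewrite (negbTE z'c) orbF.
move=> z zc; apply/idP/idP.
  move/(key _ _ zc); rewrite eqxx /= => /orP[/isoc/eqP|//].
  by rewrite (negbTE zc).
move/sub => h; apply: (connect_trans h); apply: connect1.
by rewrite he !eqxx orbT.
Qed.


Lemma edge_rel_add (T : finType) (H : {set {set T}}) c q u u' :
  edge_rel (H :|: [set [set c; q]]) u u' =
  edge_rel H u u' || ((u == c) && (u' == q)) || ((u == q) && (u' == c)).
Proof. by rewrite /edge_rel in_setU in_set1 set2_eqE orbA. Qed.

Lemma edge_rel_del (T : finType) (G : {set {set T}}) c p u u' :
  [set c; p] \in G ->
  edge_rel G u u' =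
  edge_rel (G :\ [set c; p]) u u' || ((u == c) && (u' == p)) || ((u == p) && (u' == c)).
Proof.
move=> cpG; rewrite /edge_rel in_setD1 -orbA -set2_eqE.
by case: ([set u; u'] =P [set c; p]) => [->|_]; rewrite ?cpG ?orbT ?orbF.
Qed.

Lemma acyclic_sub (T : finType) (H G : {set {set T}}) :
  H \subset G -> acyclic G -> acyclic H.
Proof.
move=> sHG aG [s [us sz cy]]; apply: aG; exists s; split => //.
by apply: sub_cycle cy => u u'; rewrite /edge_rel => /(subsetP sHG).
Qed.

Lemma acyclic_add (T : finType) (H : {set {set T}}) c q :
  acyclic H -> (forall u, [set c; u] \notin H) -> acyclic (H :|: [set [set c; q]]).
Proof.
move=> aH iso [s [us sz cy]].
have cq u : edge_rel (H :|: [set [set c; q]]) c u -> u = q.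
  rewrite edge_rel_add /edge_rel (negbTE (iso u)) eqxx /=.
  by case/orP=> [/eqP //|/andP[/eqP -> /eqP ->]].
case: (boolP (c \in s)) => cs.
  case: (rot_to cs) => i r hr.
  have ur : uniq (c :: r) by rewrite -hr rot_uniq.
  have cr : cycle (edge_rel (H :|: [set [set c; q]])) (c :: r) by rewrite -hr rot_cycle.
  have szr : 3 <= size (c :: r) by rewrite -hr size_rot.
  case: r hr ur cr szr => [|u r1] //= _.
  case/lastP: r1 => [|r2 w'] //= ur' cr' _.
  have uw : u \notin rcons r2 w' by case/andP: ur' => _ /andP[].
  move: cr'; rewrite /= rcons_path last_rcons => /andP[ecu /andP[_ ewc]].
  rewrite edge_rel_sym in ewc.
  by move: uw; rewrite (cq _ ecu) (cq _ ewc) mem_rcons inE eqxx.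
apply: aH; exists s; split => //.
apply: (@sub_in_cycle _ [pred z | z != c]); last exact: cy.
  move=> u u'; rewrite !inE => uc u'c.
  by rewrite edge_rel_add (negbTE uc) (negbTE u'c) /= !andbF !orbF.
by apply/allP => z zs /=; apply: contraNneq cs => <-.
Qed.

Lemma invol_even (T : finType) (A : {set T}) (f : T -> T) :
  (forall x, x \in A -> [/\ f x \in A, f (f x) = x & f x != x]) -> ~~ odd #|A|.
Proof.
have: #|A| <= #|A| by [].
move: {2}#|A| => n; elim: n A => [|n IH] A.
  by rewrite leqn0 => /eqP ->.
move=> le hf; case: (set_0Vmem A) => [->|[x xA]]; first by rewrite cards0.
have [fxA ffx fxx] := hf x xA.
set B := A :\: [set x; f x].
have sub : [set x; f x] \subset A by apply/subsetP => z; rewrite !inE => /orP[]/eqP->.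
have cardA : #|A| = (#|B| + 2)%N.
  by rewrite -(cardsID [set x; f x] A) (setIidPr sub) cards2 eq_sym fxx addnC.
have hB : forall z, z \in B -> [/\ f z \in B, f (f z) = z & f z != z].
  move=> z; rewrite !inE negb_or => /andP[/andP[zx zfx] zA].
  have [fzA ffz fzz] := hf z zA; split => //.
  rewrite fzA andbT negb_or; apply/andP; split.
    by apply: contra zfx => /eqP <-; rewrite ffz.
  by apply: contra zx => /eqP e; rewrite -ffz e ffx.
have leB : #|B| <= n by move: le; rewrite cardA addn2 ltnS => /ltnW.
by rewrite cardA addn2 /= negbK; exact: IH B leB hB.
Qed.


Definition goodF (V : finType) (U : {set V}) (E F : {set {set V}}) (a b d e : V) : Prop :=
  [/\ F \subset E, acyclic F, connect (edge_rel F) a b, connect (edge_rel F) d e &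
      ~~ connect (edge_rel F) a d] /\
      (forall z, z \in U -> connect (edge_rel F) a z \/ connect (edge_rel F) d z).

Lemma cover_ad (T : finType) (e : rel T) (U : {set T}) x0 y0 a d :
  symmetric e -> a \in U -> d \in U -> ~~ connect e a d ->
  (forall z, z \in U -> connect e x0 z \/ connect e y0 z) ->
  forall z, z \in U -> connect e a z \/ connect e d z.
Proof.
move=> se aU dU nad cov z zU.
have cs := sym_connect_sym se.
have j u v w : connect e u v -> connect e u w -> connect e v w.
  by move=> h1 h2; apply: connect_trans h2; rewrite cs.
case: (cov a aU) => ha; case: (cov d dU) => hd; case: (cov z zU) => hz;
  first [by left; exact: j ha hz | by right; exact: j hd hz
        | by case/negP: nad; exact: j ha hd].
Qed.

Lemma sep_good V (U : {set V}) E F (a b c d e : V) :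
  a \in U -> d \in U ->
  spanning_2forest_sep U E F [set a; b; c] [set d; e] \/
  spanning_2forest_sep U E F [set a; b] [set c; d; e] ->
  goodF U E F a b d e.
Proof.
move=> aU dU.
have se := edge_rel_sym F.
case=> [[[sub ac [x0 [y0 [x0U y0U nxy cov]]]] [P1c P2c P12]]|
        [[sub ac [x0 [y0 [x0U y0U nxy cov]]]] [P1c P2c P12]]].
  have nad : ~~ connect (edge_rel F) a d by apply: P12; rewrite !inE eqxx.
  (split; last exact: cover_ad cov); split => //; [apply: P1c|apply: P2c]; by rewrite !inE eqxx ?orbT.
have nad : ~~ connect (edge_rel F) a d by apply: P12; rewrite !inE eqxx ?orbT.
(split; last exact: cover_ad cov); split => //; [apply: P1c|apply: P2c]; by rewrite !inE eqxx ?orbT.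
Qed.

Lemma cls (T : finType) (e : rel T) r (P : {set T}) : symmetric e ->
  (forall x, x \in P -> connect e r x) -> forall x y, x \in P -> y \in P -> connect e x y.
Proof.
move=> se h x y xP yP; apply: connect_trans (h y yP).
by rewrite (sym_connect_sym se); apply: h.
Qed.

Lemma good_sep V (U : {set V}) E F (a b c d e : V) :
  a \in U -> d \in U -> c \in U -> goodF U E F a b d e ->
  spanning_2forest_sep U E F [set a; b; c] [set d; e] \/
  spanning_2forest_sep U E F [set a; b] [set c; d; e].
Proof.
move=> aU dU cU [[sub ac ab de nad] cov].
have se := edge_rel_sym F.
have cs := sym_connect_sym se.
have ex : exists x y, [/\ x \in U, y \in U, ~~ connect (edge_rel F) x y &
          forall z, z \in U -> connect (edge_rel F) x z \/ connect (edge_rel F) y z].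
  by exists a, d; split.
case: (cov c cU) => hc; [left|right]; (split; first by split).
  have h1 x : x \in [set a; b; c] -> connect (edge_rel F) a x.
    by rewrite !inE -orbA => /or3P[]/eqP->; rewrite ?connect0.
  have h2 x : x \in [set d; e] -> connect (edge_rel F) d x.
    by rewrite !inE => /orP[]/eqP->; rewrite ?connect0.
  split; [exact: cls h1 | exact: cls h2|].
  move=> x y xP yP; apply: contra nad => hxy.
  apply: connect_trans (h1 x xP) (connect_trans hxy _); rewrite cs; exact: h2.
have h1 x : x \in [set a; b] -> connect (edge_rel F) a x.
  by rewrite !inE => /orP[]/eqP->; rewrite ?connect0.
have h2 x : x \in [set c; d; e] -> connect (edge_rel F) d x.
  by rewrite !inE -orbA => /or3P[]/eqP->; rewrite ?connect0.
split; [exact: cls h1 | exact: cls h2|].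
move=> x y xP yP; apply: contra nad => hxy.
apply: connect_trans (h1 x xP) (connect_trans hxy _); rewrite cs; exact: h2.
Qed.


Lemma step V (U : {set V}) (E T : {set {set V}}) (a b c d e p q : V) :
  a != c -> b != c -> d != c -> e != c -> p != c -> q != c -> p != q ->
  p \in U -> q \in U ->
  [set c; p] \in T -> [set c; q] \in E -> [set c; q] \notin T ->
  (forall u, [set c; u] \in E -> u = p \/ u = q) ->
  spanning_tree U E T -> goodF U E (E :\: T) a b d e ->
  spanning_tree U E ((T :\ [set c; p]) :|: [set [set c; q]]) /\
  goodF U E (E :\: ((T :\ [set c; p]) :|: [set [set c; q]])) a b d e.
Proof.
move=> ac bc dc ec pc qc pq pU qU cpT cqE cqT onlyc [sTE aT cT] [[sFE aF ab de nad] cov].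
have cpE : [set c; p] \in E := subsetP sTE _ cpT.
set F := E :\: T.
have cqF : [set c; q] \in F by rewrite inE cqT cqE.
have onlyT u : [set c; u] \in T -> u = p.
  move=> h; case: (onlyc u (subsetP sTE _ h)) => // uq; by move: cqT; rewrite -uq h.
have onlyF u : [set c; u] \in F -> u = q.
  rewrite inE => /andP[nT uE]; case: (onlyc u uE) => // up; by move: nT; rewrite up cpT.
set HT := T :\ [set c; p].
set HF := F :\ [set c; q].
have isoT u : ~~ edge_rel HT c u.
  rewrite /edge_rel in_setD1; case: (boolP ([set c; u] \in T)) => h; last by rewrite andbF.
  by rewrite (onlyT u h) eqxx.
have isoF u : ~~ edge_rel HF c u.
  rewrite /edge_rel in_setD1; case: (boolP ([set c; u] \in F)) => h; last by rewrite andbF.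
  by rewrite (onlyF u h) eqxx.
have [LT1 LT2] := leaf_connect (edge_rel_sym HT) pc (fun u u' => edge_rel_del u u' cpT) isoT.
have [LT'1 LT'2] := leaf_connect (edge_rel_sym HT) qc (fun u u' => edge_rel_add HT c q u u') isoT.
have [LF1 LF2] := leaf_connect (edge_rel_sym HF) qc (fun u u' => edge_rel_del u u' cqF) isoF.
have [LF'1 LF'2] := leaf_connect (edge_rel_sym HF) pc (fun u u' => edge_rel_add HF c p u u') isoF.
have cpq : ([set c; p] == [set c; q]) = false.
  by rewrite set2_eqE eqxx (negbTE pq) /= eq_sym (negbTE qc).
have eF' : E :\: (HT :|: [set [set c; q]]) = HF :|: [set [set c; p]].
  apply/setP => z; rewrite /HT /HF /F !inE.
  case: (eqVneq z [set c; p]) => [->|zp]; first by rewrite cpq /= cpE orbT.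
  case: (eqVneq z [set c; q]) => [->|zq] /=; first by rewrite orbT.
  by rewrite !orbF.
have isoT' u : [set c; u] \notin HT by apply: isoT.
have isoF' u : [set c; u] \notin HF by apply: isoF.
split.
  split.
  - apply/subsetP => z; rewrite in_setU in_set1 => /orP[|/eqP->//].
    by rewrite in_setD1 => /andP[_ /(subsetP sTE)].
  - exact: acyclic_add (acyclic_sub (subsetDl _ _) aT) isoT'.
  move=> z z' zU z'U.
  have cs := sym_connect_sym (edge_rel_sym (HT :|: [set [set c; q]])).
  case: (eqVneq z c) => [->|zc]; case: (eqVneq z' c) => [->|z'c].
  - exact: connect0.
  - by rewrite cs LT'2 // -LT1 //; apply: cT.
  - by rewrite LT'2 // -LT1 //; apply: cT.
  - by rewrite LT'1 // -LT1 //; apply: cT.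
rewrite eF'; split; first split.
- apply/subsetP => z; rewrite in_setU in_set1 => /orP[|/eqP->//].
  by rewrite in_setD1 => /andP[_ /(subsetP sFE)].
- exact: acyclic_add (acyclic_sub (subsetDl _ _) aF) isoF'.
- by rewrite LF'1 // -LF1.
- by rewrite LF'1 // -LF1.
- by rewrite LF'1 // -LF1.
move=> z zU; case: (eqVneq z c) => [->|zc].
  by rewrite !LF'2 // -!LF1 //; apply: cov.
by rewrite !LF'1 // -!LF1 //; apply: cov.
Qed.


Lemma iso_conn (T : finType) (e : rel T) c z :
  (forall u, ~~ e c u) -> connect e c z -> z = c.
Proof.
move=> iso h; apply/eqP.
have cl : forall u u', pred1 c u -> e u u' -> pred1 c u'.
  by move=> u u' /= /eqP -> ecu; move: (iso u'); rewrite ecu.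
exact: (@closedP _ e (pred1 c) c z cl (eqxx c) h).
Qed.

Lemma symdiff_inv (T : finType) (A D : {set T}) :
  (A :\: D :|: D :\: A) :\: D :|: D :\: (A :\: D :|: D :\: A) = A.
Proof. by apply/setP => z; rewrite !inE; case: (z \in A); case: (z \in D). Qed.

Lemma symdiff_neq (T : finType) (A D : {set T}) x :
  x \in D -> (A :\: D :|: D :\: A) != A.
Proof.
move=> xD; apply/negP => /eqP /setP /(_ x); rewrite !inE xD.
by case: (x \in A).
Qed.

Lemma symdiff2 (T : finType) (A : {set T}) p q :
  p \in A -> q \notin A -> (p == q) = false ->
  A :\: [set p; q] :|: [set p; q] :\: A = A :\ p :|: [set q].
Proof.
move=> pA qA pq; apply/setP => z; rewrite !inE.
case: (eqVneq z p) => [->|zp]; first by rewrite pA pq.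
case: (eqVneq z q) => [->|zq] /=; first by rewrite (negbTE qA) orbT.
by rewrite andbF.
Qed.

Lemma main_gen V (U : {set V}) (E : {set {set V}}) (a b c d e x y : V) :
  a \in U -> d \in U -> c \in U ->
  a != c -> b != c -> d != c -> e != c ->
  x != y -> x \in U -> y \in U -> x != c -> y != c ->
  [set c; x] \in E -> [set c; y] \in E ->
  (forall u, [set c; u] \in E -> u = x \/ u = y) ->
  let S1 := calS U E [set a; b; c] [set d; e] in
  let S2 := calS U E [set a; b] [set c; d; e] in
  (exists f : {set {set V}} -> {set {set V}},
     forall T, T \in S1 :|: S2 ->
       [/\ f T \in S1 :|: S2, f (f T) = T & f T != T]) /\
  odd (#|S1| + #|S2|) = false.
Proof.
move=> aU dU cU ac bc dc ec xy xU yU xc yc cxE cyE onlyc S1 S2.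
have memS T : T \in S1 :|: S2 <-> spanning_tree U E T /\ goodF U E (E :\: T) a b d e.
  split.
    rewrite /S1 /S2 /calS !inE => /orP[] /asboolP [st sep]; split => //;
      apply: sep_good => //; [left|right]; exact: sep.
  move=> [st g]; rewrite /S1 /S2 /calS !inE.
  by case: (good_sep aU dU cU g) => h; apply/orP; [left|right]; apply/asboolP.
set D := [set [set c; x]; [set c; y]].
pose f T := (T :\: D) :|: (D :\: T).
have ff T : f (f T) = T.
  exact: symdiff_inv.
have cxD : [set c; x] \in D by rewrite /D !inE eqxx.
have fne T : f T != T.
  exact: symdiff_neq cxD.
have cxy : ([set c; x] == [set c; y]) = false.
  by rewrite set2_eqE eqxx (negbTE xy) /= eq_sym (negbTE yc).
have disj : S1 :&: S2 = set0.
  apply/setP => T; rewrite /S1 /S2 /calS !inE; apply/negP.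
  move=> /andP[/asboolP[_ [_ [_ _ P12]]] /asboolP[_ [_ [_ P2c _]]]].
  have := P12 c d; rewrite !inE !eqxx ?orbT => /(_ isT isT) /negP; apply.
  by apply: P2c; rewrite !inE eqxx ?orbT.
have main : forall T, T \in S1 :|: S2 ->
       [/\ f T \in S1 :|: S2, f (f T) = T & f T != T].
  move=> T /memS [st g].
  have hT : [set c; x] \in T \/ [set c; y] \in T.
    case: st => sTE aT cT.
    case: (pickP (fun u => edge_rel T c u)) => [u hu|none].
      by case: (onlyc u (subsetP sTE _ hu)) => eu; subst u; [left|right].
    have := iso_conn (fun u => negbT (none u)) (cT c a cU aU).
    by move/eqP; rewrite (negbTE ac).
  have hF : [set c; x] \notin T \/ [set c; y] \notin T.
    case: g => [[sFE _ _ _ _] cov].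
    have cs := sym_connect_sym (edge_rel_sym (E :\: T)).
    case: (pickP (fun u => edge_rel (E :\: T) c u)) => [u hu|none].
      move: hu; rewrite /edge_rel inE => /andP[nT uE].
      by case: (onlyc u uE) => eu; subst u; [left|right].
    have iso := fun u => negbT (none u).
    case: (cov c cU); rewrite cs => /(iso_conn iso) /eqP; by rewrite ?(negbTE ac) ?(negbTE dc).
  have fin p q : p != q -> p \in U -> q \in U -> p != c -> q != c ->
      [set c; q] \in E ->
      (forall u, [set c; u] \in E -> u = p \/ u = q) ->
      [set c; p] \in T -> [set c; q] \notin T ->
      f T = (T :\ [set c; p]) :|: [set [set c; q]] ->
      [/\ f T \in S1 :|: S2, f (f T) = T & f T != T].
    move=> pq pU qU pc qc cqE onl cpT cqT fT; split => //.
    by rewrite fT; apply/memS; exact: step ac bc dc ec pc qc pq pU qU cpT cqE cqT onl st g.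
  have cyx : ([set c; y] == [set c; x]) = false by rewrite eq_sym.
  case: hT => cT; case: hF => ncT.
  - by rewrite cT in ncT.
  - apply: (fin x y) => //; rewrite /f /D; exact: symdiff2.
  - apply: (fin y x) => //; first by rewrite eq_sym.
      by move=> u /onlyc [] ->; [right|left].
    by rewrite /f /D (setUC [set [set c; x]]); apply: symdiff2 => //; rewrite cyx.
  - by rewrite cT in ncT.
split; first by exists f.
rewrite -cardsUI disj cards0 addn0; apply/negbTE.
exact: invol_even main.
Qed.


Theorem lemma4p2 (V : finType) (adj : rel V) (v w a b c d e : V) :
  simple_graph adj ->
  graph_connected adj ->
  regular4 adj ->
  odd #|V| ->
  adj v w ->
  nbhd adj v :&: nbhd adj w = [set c] ->
  nbhd adj w = [set v; a; b; c] ->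
  nbhd adj v = [set w; c; d; e] ->
  let U := ~: [set v; w] in
  let E := induced_edges adj U in
  let S1 := calS U E [set a; b; c] [set d; e] in
  let S2 := calS U E [set a; b] [set c; d; e] in
  (exists f : {set {set V}} -> {set {set V}},
     forall T, T \in S1 :|: S2 ->
       [/\ f T \in S1 :|: S2, f (f T) = T & f T != T]) /\
  odd (#|S1| + #|S2|) = false.
Proof.
move=> [sym irr] _ reg _ avw _ hw hv U E.
have uw : uniq [:: v; a; b; c] by apply: card4_uniq; rewrite -hw reg.
have uv : uniq [:: w; c; d; e] by apply: card4_uniq; rewrite -hv reg.
move: uw uv => /=; rewrite !inE !negb_or !andbT.
move=> /and3P[/and3P[va vb vc] /andP[ab ac] bc] /and3P[/and3P[wc wd we] /andP[cd ce] de].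
have adjw z : z \in [set v; a; b; c] -> adj w z by rewrite -hw inE.
have adjv z : z \in [set w; c; d; e] -> adj v z by rewrite -hv inE.
have wa : adj w a by apply: adjw; rewrite !inE eqxx ?orbT.
have vd : adj v d by apply: adjv; rewrite !inE eqxx ?orbT.
have wc' : adj w c by apply: adjw; rewrite !inE eqxx ?orbT.
have vc' : adj v c by apply: adjv; rewrite !inE eqxx ?orbT.
have neq_adj z z' : adj z z' -> z != z'.
  by apply: contraTneq => ->; rewrite irr.
have inU z : (z \in U) = (z != v) && (z != w) by rewrite /U !inE negb_or.
have aU : a \in U by rewrite inU (eq_sym a v) va /= eq_sym neq_adj.
have dU : d \in U by rewrite inU (eq_sym d w) wd andbT eq_sym neq_adj.
have cU : c \in U by rewrite inU (eq_sym c v) vc (eq_sym c w) wc.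
set N := nbhd adj c :\: [set v; w].
have cardN : #|N| = 2.
  have sub : [set v; w] \subset nbhd adj c.
    by apply/subsetP => z; rewrite !inE => /orP[]/eqP->; rewrite sym.
  by rewrite /N cardsD (setIidPr sub) cards2 neq_adj // reg.
have [x [y [xy hN]]] : exists x y, x != y /\ N = [set x; y] by apply/cards2P; rewrite cardN.
have inN z : z \in N = (z \in U) && adj c z by rewrite /N /nbhd inU !inE negb_or.
have xN : x \in N by rewrite hN !inE eqxx.
have yN : y \in N by rewrite hN !inE eqxx orbT.
rewrite inN in xN; rewrite inN in yN.
case/andP: xN => xU cx; case/andP: yN => yU cy.
have inEE z z' : z \in U -> z' \in U -> adj z z' -> [set z; z'] \in E.
  move=> zU z'U h; rewrite /E /induced_edges inE; apply/existsP; exists z.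
  by apply/existsP; exists z'; rewrite zU z'U h eqxx.
apply: (@main_gen _ U E a b c d e x y) => //; try (by rewrite eq_sym); try (by rewrite eq_sym neq_adj);
  try (by apply: inEE).
move=> u; rewrite /E /induced_edges in_set => /existsP[x'] /existsP[y'].
case/and4P=> x'U y'U hxy; rewrite set2_eqE => /orP[]/andP[/eqP ex /eqP eu]; subst x' y'.
  have : u \in N by rewrite inN y'U hxy.
  by rewrite hN in_setU !in_set1 => /orP[]/eqP->; [left|right].
have : u \in N by rewrite inN x'U sym hxy.
by rewrite hN in_setU !in_set1 => /orP[]/eqP->; [left|right].
Qed.
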